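(* Let $\mathbb{K}$ be a field, $m=4$, and for $p\in\mathbf{Z}^2$ let $\langle p\rangle=\{q\in\mathbf{Z}^2:p\le q\le(10,10)\}$. Let $\mathcal W=\bigcup_{k=0}^{4}\langle(8-2k,2k)\rangle$, $x_1=(7,1)$, $x_2=(5,3)$, $x_3=(3,5)$, $x_4=(1,7)$. Define $\mathcal I_1=\mathcal W\cup\langle x_1\rangle\cup\langle x_2\rangle\cup\langle x_3\rangle\cup\langle x_4\rangle$, $\mathcal I_2=\mathcal W\cup\langle x_1-(1,1)\rangle\cup\langle x_2\rangle\cup\langle x_4\rangle$, $\mathcal I_3=\mathcal W\cup\langle x_1\rangle\cup\langle x_2-(1,1)\rangle\cup\langle x_3\rangle$, $\mathcal J_1=\mathcal W\cup\langle x_1\rangle\cup\langle x_2\rangle\cup\langle x_3\rangle\cup\langle x_4\rangle$, $\mathcal J_2=\mathcal W\cup\langle x_1\rangle\cup\langle x_3-(1,1)\rangle\cup\langle x_4\rangle$, $\mathcal J_3=\mathcal W\cup\langle x_2\rangle\cup\langle x_3\rangle\cup\langle x_4-(1,1)\rangle$, and $M=\bigoplus_{i=1}^3I^{\mathcal I_i}$, $N=\bigoplus_{j=1}^3I^{\mathcal J_j}$ as functors $\mathbf{Z}^2\to\mathbf{Vec}_{\mathbb{K}}$. Then $d_I(M,N)=1$ and $d_B(\mathcal B(M),\mathcal B(N))=2$, where $\mathcal B(M)=\{\mathcal I_1,\mathcal I_2,\mathcal I_3\}$ and $\mathcal B(N)=\{\mathcal J_1,\mathcal J_2,\mathcal 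J_3\}$.
   Context: $\mathbf{Z}^2$ has the product order. $I^{\mathcal J}$ is the interval module ($\mathbb{K}$ on $\mathcal J$, $0$ elsewhere, identity maps between points of $\mathcal J$, zero otherwise). For $\delta\in\{0,1,\dots\}$: $M(\delta)_a=M_{a+(\delta,\delta)}$, $f(\delta)_a=f_{a+(\delta,\delta)}$; $\phi^{2\delta}_M:M\to M(2\delta)$ is given by internal maps; a $\delta$-interleaving is $f:M\to N(\delta)$, $g:N\to M(\delta)$ with $g(\delta)\circ f=\phi^{2\delta}_M$ and $f(\delta)\circ g=\phi^{2\delta}_N$; $d_I(M,N)$ is the least such $\delta$. Intervals are $\delta$-interleaved if their interval modules are; $\mathcal J$ is $2\delta$-trivial if $I^{\mathcal J}$ is $\delta$-interleaved with $0$; $\mathcal C_{2\delta}$ is the multiset of intervals in $\mathcal C$ that are not $2\delta$-trivial. A $\delta$-matching between barcodes $\mathcal C,\mathcal D$ is a partial bijection $\sigma$ whose domain contains $\mathcal C_{2\delta}$, image contains $\mathcal D_{2\delta}$, and with $\sigma(\mathcal J)=\mathcal K$ implying $\mathcal J,\mathcal K$ are $\delta$-interleaved; $d_B(\mathcal C,\mathcal D)$ is the least $\delta\in\{0,1,\dots\}$ admitting a $\delta$-matching. *)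

(* Defs.v *)
(* Persistence modules over Z^2, pointwise finite-dimensional,
   encoded by dimensions and matrices (row-vector convention: a matrix
   A : 'M_(m,n) is the linear map K^m -> K^n, v |-> v *m A, so composition
   "f then g" is f *m g). *)
From HB Require Import structures.
From mathcomp Require Import all_boot all_order all_algebra.
Set Implicit Arguments. Unset Strict Implicit. Unset Printing Implicit Defensive.
Import Order.TTheory GRing.Theory Num.Theory.
Local Open Scope ring_scope.

Definition point := (int * int)%type.
Definition ple (a b : point) : bool := (a.1 <= b.1) && (a.2 <= b.2).
Definition shift (d : nat) (a : point) : point := (a.1 + d%:Z, a.2 + d%:Z).

(* A Z^2-indexed family of finite-dim K-spaces with structure maps M_{a->b}
   (only meaningful for a <= b). *)
Record pmod (K : fieldType) := PMod {
  pdim : point -> nat;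
  pmap : forall a b : point, 'M[K]_(pdim a, pdim b) }.
Arguments PMod {K}.

Definition is_pmod (K : fieldType) (M : pmod K) : Prop :=
  (forall a, pmap M a a = 1%:M) /\
  (forall a b c, ple a b -> ple b c -> pmap M a b *m pmap M b c = pmap M a c).

Definition zmod0 (K : fieldType) : pmod K := PMod (fun _ => 0%N) (fun a b => 0).

Definition imod (K : fieldType) (J : pred point) : pmod K :=
  PMod (fun a => nat_of_bool (J a))
       (fun a b => const_mx (if J a && J b then 1 else 0)).

Definition dsum (K : fieldType) (M N : pmod K) : pmod K :=
  PMod (fun a => (pdim M a + pdim N a)%N)
       (fun a b => block_mx (pmap M a b) 0 0 (pmap N a b)).

Definition shifted_hom (K : fieldType) (M N : pmod K) (d : nat)
  (f : forall a, 'M[K]_(pdim M a, pdim N (shift d a))) : Prop :=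
  forall a b, ple a b -> pmap M a b *m f b = f a *m pmap N (shift d a) (shift d b).

Definition interleaving (K : fieldType) (M N : pmod K) (d : nat)
  (f : forall a, 'M[K]_(pdim M a, pdim N (shift d a)))
  (g : forall a, 'M[K]_(pdim N a, pdim M (shift d a))) : Prop :=
  [/\ shifted_hom f, shifted_hom g,
      (forall a, f a *m g (shift d a) = pmap M a (shift d (shift d a))) &
      (forall a, g a *m f (shift d a) = pmap N a (shift d (shift d a)))].

Definition interleaved (K : fieldType) (M N : pmod K) (d : nat) : Prop :=
  exists f g, @interleaving K M N d f g.

Definition is_least (P : nat -> Prop) (n : nat) : Prop :=
  P n /\ forall m, (m < n)%N -> ~ P m.

Definition interleaving_dist_is (K : fieldType) (M N : pmod K) (n : nat) : Prop :=
  is_least (interleaved M N) n.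

(* J is 2d-trivial : I^J is d-interleaved with 0 *)
Definition trivial2 (K : fieldType) (d : nat) (J : pred point) : Prop :=
  interleaved (imod K J) (zmod0 K) d.

(* barcodes: finite multisets of intervals, as lists *)
Definition barcode := seq (pred point).
Definition bnth (C : barcode) (i : nat) : pred point := nth (fun _ => false) C i.

Definition matching (K : fieldType) (C D : barcode) (d : nat) : Prop :=
  exists sigma : 'I_(size C) -> option 'I_(size D),
    [/\ (forall (i i' : 'I_(size C)) j, sigma i = Some j -> sigma i' = Some j -> i = i'),
        (forall i : 'I_(size C), ~ trivial2 K d (bnth C i) -> sigma i <> None),
        (forall j : 'I_(size D), ~ trivial2 K d (bnth D j) -> exists i, sigma i = Some j) &
        (forall (i : 'I_(size C)) (j : 'I_(size D)), sigma i = Some j ->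
           interleaved (imod K (bnth C i)) (imod K (bnth D j)) d)].

Definition bottleneck_dist_is (K : fieldType) (C D : barcode) (n : nat) : Prop :=
  is_least (matching K C D) n.

Definition top : point := (10, 10).
Definition upb (p : point) : pred point := fun q => ple p q && ple q top.
Definition sub11 (p : point) : point := (p.1 - 1, p.2 - 1).

Definition W : pred point :=
  fun q => has (fun k : nat => upb (8 - 2 * k%:Z, 2 * k%:Z) q) (iota 0 5).
Definition x1 : point := (7, 1).
Definition x2 : point := (5, 3).
Definition x3 : point := (3, 5).
Definition x4 : point := (1, 7).

Definition I1 : pred point := fun q => [|| W q, upb x1 q, upb x2 q, upb x3 q | upb x4 q].
Definition I2 : pred point := fun q => [|| W q, upb (sub11 x1) q, upb x2 q | upb x4 q].
Definition I3 : pred point := fun q => [|| W q, upb x1 q, upb (sub11 x2) q | upb x3 q].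
Definition J1 : pred point := fun q => [|| W q, upb x1 q, upb x2 q, upb x3 q | upb x4 q].
Definition J2 : pred point := fun q => [|| W q, upb x1 q, upb (sub11 x3) q | upb x4 q].
Definition J3 : pred point := fun q => [|| W q, upb x2 q, upb x3 q | upb (sub11 x4) q].

Definition Mmod (K : fieldType) : pmod K := dsum (imod K I1) (dsum (imod K I2) (imod K I3)).
Definition Nmod (K : fieldType) : pmod K := dsum (imod K J1) (dsum (imod K J2) (imod K J3)).
Definition BM : barcode := [:: I1; I2; I3].
Definition BN : barcode := [:: J1; J2; J3].

(* Main.v *)
Set Warnings "-notation-overridden,-ambiguous-paths".
Require Import Defs.
From HB Require Import structures.
From mathcomp Require Import all_boot all_order all_algebra.
From mathcomp Require Import zify.
Set Implicit Arguments. Unset Strict Implicit. Unset Printing Implicit Defensive.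
Import Order.TTheory GRing.Theory Num.Theory.
Local Open Scope ring_scope.

Definition tri (b0 b1 b2 : bool) (i : nat) : bool :=
  match i with 0 => b0 | 1 => b1 | _ => b2 end.

Definition mulc (q : nat -> bool) (c d : nat -> nat -> int) (i k : nat) : int :=
  c i 0%N * d 0%N k * (nat_of_bool (q 0%N))%:Z + c i 1%N * d 1%N k * (nat_of_bool (q 1%N))%:Z
  + c i 2%N * d 2%N k * (nat_of_bool (q 2%N))%:Z.

Definition diagc (p r : nat -> bool) (i k : nat) : int :=
  if (i == k)%N then (nat_of_bool (p i && r i))%:Z else 0.

Definition eqcheck (p r : nat -> bool) (X Y : nat -> nat -> int) : bool :=
  all (fun i => p i ==> all (fun k => r k ==> (X i k == Y i k)) (iota 0 3)) (iota 0 3).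

Section Gen.
Variable K : fieldType.

Lemma ord_bool (p : bool) (i : 'I_p) : p.
Proof. by case: p i => // -[]. Qed.

Lemma const_eq (p q : bool) (x y : K) : (p -> q -> x = y) ->
  (const_mx x : 'M_(p, q)) = const_mx y.
Proof. move=> H; apply/matrixP => i j; rewrite !mxE; exact: H (ord_bool i) (ord_bool j). Qed.

Lemma const_mul m n k (x y : K) :
  (const_mx x : 'M_(m,n)) *m (const_mx y : 'M_(n,k)) = const_mx (x * y *+ n).
Proof.
apply/matrixP => i j; rewrite !mxE (eq_bigr (fun _ => x * y)) ?sumr_const ?card_ord //.
by move=> l _; rewrite !mxE.
Qed.

Lemma const_add m n (x y : K) :
  (const_mx x : 'M_(m,n)) + const_mx y = const_mx (x + y).
Proof. by apply/matrixP => i j; rewrite !mxE. Qed.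

Definition bm (p q : nat -> bool) (c : nat -> nat -> int) :
  'M[K]_(nat_of_bool (p 0%N) + (nat_of_bool (p 1%N) + nat_of_bool (p 2%N)),
         nat_of_bool (q 0%N) + (nat_of_bool (q 1%N) + nat_of_bool (q 2%N))) :=
  block_mx (const_mx (c 0 0)%N%:~R)
           (row_mx (const_mx (c 0 1)%N%:~R) (const_mx (c 0 2)%N%:~R))
           (col_mx (const_mx (c 1 0)%N%:~R) (const_mx (c 2 0)%N%:~R))
           (block_mx (const_mx (c 1 1)%N%:~R) (const_mx (c 1 2)%N%:~R)
                     (const_mx (c 2 1)%N%:~R) (const_mx (c 2 2)%N%:~R)).

Lemma intr_mulc (x y : int) (b : bool) :
  (x%:~R : K) * y%:~R *+ b = (x * y * (nat_of_bool b)%:Z)%:~R.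
Proof. by case: b; rewrite /= ?mulr1n ?mulr1 ?mulr0 ?mulr0n ?intrM. Qed.

Lemma bm_mul p q r c d : bm p q c *m bm q r d = bm p r (mulc q c d).
Proof.
rewrite /bm mulmx_block mul_row_block mul_block_col mul_col_row mulmx_block.
rewrite ?mul_row_col ?mul_mx_row ?mul_col_mx ?mul_row_col ?const_mul.
rewrite ?add_row_mx ?add_col_mx ?add_block_mx ?const_add /mulc.
rewrite ?add_row_mx ?const_add ?intr_mulc -?intrD ?addrA.
by rewrite [in RHS](block_mxEv (const_mx _)).
Qed.


Lemma bm_eq p r X Y : eqcheck p r X Y -> bm p r X = bm p r Y.
Proof.
move=> H.
have H' i k : (i < 3)%N -> (k < 3)%N -> p i -> r k -> X i k = Y i k.
  move=> hi hk pi rk.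
  have hi' : i \in iota 0 3 by rewrite mem_iota; lia.
  have hk' : k \in iota 0 3 by rewrite mem_iota; lia.
  have /implyP/(_ pi)/allP/(_ k hk')/implyP/(_ rk)/eqP := allP H i hi'.
  done.
have C i k : (i < 3)%N -> (k < 3)%N ->
   (const_mx (X i k)%:~R : 'M[K]_(p i, r k)) = const_mx (Y i k)%:~R.
  by move=> hi hk; apply: const_eq => pi rk; rewrite (H' i k).
rewrite /bm; congr block_mx; [exact: (C 0 0)%N| congr row_mx| congr col_mx| congr block_mx].
all: first [exact: (C 0 1)%N| exact: (C 0 2)%N|exact: (C 1 0)%N|exact: (C 2 0)%N|
  exact: (C 1 1)%N|exact: (C 1 2)%N|exact: (C 2 1)%N|exact: (C 2 2)%N].
Qed.

Definition dsum3 (U1 U2 U3 : pred point) : pmod K :=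
  dsum (imod K U1) (dsum (imod K U2) (imod K U3)).

Definition P3 (U1 U2 U3 : pred point) (a : point) := tri (U1 a) (U2 a) (U3 a).

Lemma pmap3 U1 U2 U3 a b :
  Defs.pmap (dsum3 U1 U2 U3) a b = bm (P3 U1 U2 U3 a) (P3 U1 U2 U3 b) (diagc (P3 U1 U2 U3 a) (P3 U1 U2 U3 b)).
Proof.
have E (x : bool) : (if x then 1 else 0 : K) = (nat_of_bool x)%:Z%:~R by case: x.
have Z m n : (const_mx 0 : 'M[K]_(m,n)) = 0 by apply/matrixP => i j; rewrite !mxE.
by rewrite /bm /diagc /= !E ?Z ?row_mx0 ?col_mx0.
Qed.

Definition natcheck (PU PV : point -> nat -> bool) d C a b : bool :=
  if ple a b then eqcheck (PU a) (PV (shift d b))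
     (mulc (PU b) (diagc (PU a) (PU b)) C)
     (mulc (PV (shift d a)) C (diagc (PV (shift d a)) (PV (shift d b)))) else true.
Definition compcheck (PU PV : point -> nat -> bool) d C D a : bool :=
  eqcheck (PU a) (PU (shift d (shift d a))) (mulc (PV (shift d a)) C D)
     (diagc (PU a) (PU (shift d (shift d a)))).

Lemma inter3 U1 U2 U3 V1 V2 V3 d C D :
  (forall a b, natcheck (P3 U1 U2 U3) (P3 V1 V2 V3) d C a b) ->
  (forall a b, natcheck (P3 V1 V2 V3) (P3 U1 U2 U3) d D a b) ->
  (forall a, compcheck (P3 U1 U2 U3) (P3 V1 V2 V3) d C D a) ->
  (forall a, compcheck (P3 V1 V2 V3) (P3 U1 U2 U3) d D C a) ->
  interleaved (dsum3 U1 U2 U3) (dsum3 V1 V2 V3) d.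
Proof.
move=> h1 h2 h3 h4.
exists (fun a => bm (P3 U1 U2 U3 a) (P3 V1 V2 V3 (shift d a)) C),
       (fun a => bm (P3 V1 V2 V3 a) (P3 U1 U2 U3 (shift d a)) D).
split.
- move=> a b hab; rewrite !pmap3 !bm_mul; apply: bm_eq.
  by have := h1 a b; rewrite /natcheck hab.
- move=> a b hab; rewrite !pmap3 !bm_mul; apply: bm_eq.
  by have := h2 a b; rewrite /natcheck hab.
- by move=> a; rewrite pmap3 bm_mul; apply: bm_eq; exact: h3.
- by move=> a; rewrite pmap3 bm_mul; apply: bm_eq; exact: h4.
Qed.

Definition nat1 (U V : pred point) d a b : bool :=
  if ple a b then (U a ==> V (shift d b) ==> ((U a && U b) == (V (shift d a) && V (shift d b)))) else true.
Definition comp1 (U V : pred point) d a : bool :=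
  U a ==> U (shift d (shift d a)) ==> V (shift d a).

Lemma inter1 (U V : pred point) d :
  (forall a b, nat1 U V d a b) -> (forall a b, nat1 V U d a b) ->
  (forall a, comp1 U V d a) -> (forall a, comp1 V U d a) ->
  interleaved (imod K U) (imod K V) d.
Proof.
move=> h1 h2 h3 h4.
exists (fun a => const_mx 1 : 'M[K]_(U a, V (shift d a))),
       (fun a => const_mx 1 : 'M[K]_(V a, U (shift d a))).
split.
- move=> a b hab /=; rewrite !const_mul; apply: const_eq => ua vb.
  move: (h1 a b); rewrite /nat1 hab ua vb /=.
  by case: (U b); case: (V (shift d a)) => //=; rewrite ?mulr1 ?mul1r ?mulr0 ?mul0r ?mulr1n ?mulr0n.
- move=> a b hab /=; rewrite !const_mul; apply: const_eq => ua vb.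
  move: (h2 a b); rewrite /nat1 hab ua vb /=.
  by case: (V b); case: (U (shift d a)) => //=; rewrite ?mulr1 ?mul1r ?mulr0 ?mul0r ?mulr1n ?mulr0n.
- move=> a /=; rewrite !const_mul; apply: const_eq => ua uss.
  by move: (h3 a); rewrite /comp1 ua uss /= => ->; rewrite mulr1 mulr1n.
- move=> a /=; rewrite !const_mul; apply: const_eq => ua uss.
  by move: (h4 a); rewrite /comp1 ua uss /= => ->; rewrite mulr1 mulr1n.
Qed.

Lemma mid0 m n k (A : 'M[K]_(m,n)) (B : 'M_(n,k)) : n = 0%N -> A *m B = 0.
Proof. by move=> hn; move: A B; rewrite hn => A B; rewrite thinmx0 mul0mx. Qed.

Lemma not_inter_M (M N : pmod K) d a : pdim N (shift d a) = 0%N ->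
  Defs.pmap M a (shift d (shift d a)) != 0 -> ~ interleaved M N d.
Proof. by move=> h0 hne [f [g [_ _ Hfg _]]]; move: hne; rewrite -Hfg mid0 ?eqxx. Qed.

Lemma not_inter_N (M N : pmod K) d a : pdim M (shift d a) = 0%N ->
  Defs.pmap N a (shift d (shift d a)) != 0 -> ~ interleaved M N d.
Proof. by move=> h0 hne [f [g [_ _ _ Hgf]]]; move: hne; rewrite -Hgf mid0 ?eqxx. Qed.

Lemma imod_ne (U : pred point) a b : U a -> U b -> Defs.pmap (imod K U) a b != 0.
Proof.
move=> Ua Ub; apply/eqP => /matrixP H.
have i0 : (0 < U a)%N by rewrite Ua.
have j0 : (0 < U b)%N by rewrite Ub.
move: (H (Ordinal i0) (Ordinal j0)); rewrite !mxE Ua Ub /=; apply/eqP; exact: oner_neq0.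
Qed.

Lemma dsum_ul (M N : pmod K) a b : Defs.pmap (dsum M N) a b = 0 -> Defs.pmap M a b = 0.
Proof. by move=> /(congr1 ulsubmx) /=; rewrite block_mxKul -block_mx0 block_mxKul. Qed.
Lemma dsum_dr (M N : pmod K) a b : Defs.pmap (dsum M N) a b = 0 -> Defs.pmap N a b = 0.
Proof. by move=> /(congr1 drsubmx) /=; rewrite block_mxKdr -block_mx0 block_mxKdr. Qed.
End Gen.

Definition inbox (a : point) : bool := (0 <= a.1 <= 10) && (0 <= a.2 <= 10).
Definition boxed (U : pred point) := forall a, U a -> inbox a.

Lemma upb_box p a : 0 <= p.1 -> 0 <= p.2 -> upb p a -> inbox a.
Proof.
case: a p => x y [u v]; rewrite /upb /ple /Defs.top /inbox /= => h1 h2.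
case/andP => /andP [h3 h4] /andP [h5 h6]; apply/andP; split; apply/andP; split; lia.
Qed.

Ltac boxtac := move=> a; rewrite /W /=;
  repeat (case/orP; [apply: upb_box => //|]); try (apply: upb_box => //).

Lemma W_box : boxed W.
Proof. boxtac. all: try (rewrite ?addr0 ?mulr0 //). Qed.

Lemma ex_W a : W a -> inbox a. Proof. exact: W_box. Qed.

Ltac boxtac2 := move=> a /=;
  repeat (case/orP; [first [exact: ex_W | apply: upb_box => //] |]);
  first [exact: ex_W | apply: upb_box => //].

Lemma I1_box : boxed I1. Proof. boxtac2. Qed.
Lemma I2_box : boxed I2. Proof. boxtac2. Qed.
Lemma I3_box : boxed I3. Proof. boxtac2. Qed.
Lemma J1_box : boxed J1. Proof. boxtac2. Qed.
Lemma J2_box : boxed J2. Proof. boxtac2. Qed.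
Lemma J3_box : boxed J3. Proof. boxtac2. Qed.

Definition enumall (off : int) (P : point -> bool) : bool :=
  all (fun n => all (fun m => P (n%:Z - off, m%:Z - off)) (iota 0 11)) (iota 0 11).

Lemma enum_box off (P : point -> bool) : enumall off P ->
  forall a : point, inbox (a.1 + off, a.2 + off) -> P a.
Proof.
move=> H [x y]; rewrite /inbox /= => /andP [/andP [h1 h2] /andP [h3 h4]].
case E1: (x + off) h1 h2 => [n|n] h1 h2; last by lia.
case E2: (y + off) h3 h4 => [m|m] h3 h4; last by lia.
have -> : x = n%:Z - off by lia.
have -> : y = m%:Z - off by lia.
have hn : n \in iota 0 11 by rewrite mem_iota; lia.
have hm : m \in iota 0 11 by rewrite mem_iota; lia.
exact: (allP (allP H n hn) m hm).
Qed.

Lemma nbox (U : pred point) a : boxed U -> ~~ inbox a -> U a = false.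
Proof. by move=> hU ha; apply/negP => /hU; apply/negP. Qed.

Lemma inbox0 a : inbox a -> inbox (a.1 + 0, a.2 + 0).
Proof. by case: a => x y; rewrite !addr0. Qed.

Section Red.
Variable U1 U2 U3 V1 V2 V3 : pred point.
Hypothesis (bU1 : boxed U1) (bU2 : boxed U2) (bU3 : boxed U3)
  (bV1 : boxed V1) (bV2 : boxed V2) (bV3 : boxed V3).

Lemma natcheck_red d C :
  enumall 0 (fun a => enumall d%:Z (fun b => natcheck (P3 U1 U2 U3) (P3 V1 V2 V3) d C a b)) ->
  forall a b, natcheck (P3 U1 U2 U3) (P3 V1 V2 V3) d C a b.
Proof.
move=> H a b.
case: (boolP (inbox a)) => ha; last first.
  by rewrite /natcheck /eqcheck /P3 /= !(nbox _ ha); case: (ple a b).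
case: (boolP (inbox (shift d b))) => hb; last first.
  rewrite /natcheck /eqcheck /P3 /= !(nbox _ hb) //=.
  by case: (ple a b); rewrite //= !implybT.
exact: (enum_box (enum_box H (inbox0 ha)) hb).
Qed.

Lemma compcheck_red d C D :
  enumall 0 (fun a => compcheck (P3 U1 U2 U3) (P3 V1 V2 V3) d C D a) ->
  forall a, compcheck (P3 U1 U2 U3) (P3 V1 V2 V3) d C D a.
Proof.
move=> H a.
case: (boolP (inbox a)) => ha; last first.
  by rewrite /compcheck /eqcheck /P3 /= !(nbox _ ha).
exact: (enum_box H (inbox0 ha)).
Qed.
End Red.

Section Red1.
Variable U V : pred point.
Hypothesis (bU : boxed U) (bV : boxed V).
Lemma nat1_red d :
  enumall 0 (fun a => enumall d%:Z (fun b => nat1 U V d a b)) -> forall a b, nat1 U V d a b.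
Proof.
move=> H a b.
case: (boolP (inbox a)) => ha; last by rewrite /nat1 (nbox bU ha) /=; case: (ple a b).
case: (boolP (inbox (shift d b))) => hb; last by rewrite /nat1 (nbox bV hb) /=; case: (ple a b); rewrite //= !implybT.
exact: (enum_box (enum_box H (inbox0 ha)) hb).
Qed.
Lemma comp1_red d : enumall 0 (fun a => comp1 U V d a) -> forall a, comp1 U V d a.
Proof.
move=> H a.
case: (boolP (inbox a)) => ha; last by rewrite /comp1 (nbox bU ha).
exact: (enum_box H (inbox0 ha)).
Qed.
End Red1.

Definition Cm (i j : nat) : int :=
  nth 0 (nth [::] [:: [:: 1; 1; 1]; [:: 1; 1; 0]; [:: 1; 0; 1]] i) j.
Definition Dm (i j : nat) : int :=
  nth 0 (nth [::] [:: [:: -1; 1; 1]; [:: 1; 0; -1]; [:: 1; -1; 0]] i) j.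

Lemma chk1 : enumall 0 (fun a => enumall 1%:Z (fun b =>
   natcheck (P3 I1 I2 I3) (P3 J1 J2 J3) 1 Cm a b)).
Proof. vm_compute. reflexivity. Qed.
Lemma chk2 : enumall 0 (fun a => enumall 1%:Z (fun b =>
   natcheck (P3 J1 J2 J3) (P3 I1 I2 I3) 1 Dm a b)).
Proof. vm_compute. reflexivity. Qed.
Lemma chk3 : enumall 0 (fun a => compcheck (P3 I1 I2 I3) (P3 J1 J2 J3) 1 Cm Dm a).
Proof. vm_compute. reflexivity. Qed.
Lemma chk4 : enumall 0 (fun a => compcheck (P3 J1 J2 J3) (P3 I1 I2 I3) 1 Dm Cm a).
Proof. vm_compute. reflexivity. Qed.

Definition chk_pair (U V : pred point) : bool :=
  [&& enumall 0 (fun a => enumall 2%:Z (fun b => nat1 U V 2 a b)),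
      enumall 0 (fun a => enumall 2%:Z (fun b => nat1 V U 2 a b)),
      enumall 0 (fun a => comp1 U V 2 a) & enumall 0 (fun a => comp1 V U 2 a)].

Lemma chkp1 : chk_pair I1 J1. Proof. vm_compute. reflexivity. Qed.
Lemma chkp2 : chk_pair I2 J2. Proof. vm_compute. reflexivity. Qed.
Lemma chkp3 : chk_pair I3 J3. Proof. vm_compute. reflexivity. Qed.

Lemma pair_inter K U V : boxed U -> boxed V -> chk_pair U V -> interleaved (imod K U) (imod K V) 2.
Proof.
move=> bU bV /and4P [h1 h2 h3 h4].
apply: inter1; [exact: nat1_red h1 | exact: nat1_red h2 | exact: comp1_red h3 | exact: comp1_red h4].
Qed.

Lemma ntriv K d (J : pred point) : J (8,0) -> J (shift d (shift d (8,0))) -> ~ trivial2 K d J.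
Proof. move=> h1 h2; apply: (not_inter_M (a := (8,0))) => //; exact: imod_ne. Qed.

Lemma nomatch0 K : ~ matching K BM BN 0.
Proof.
move=> [s [_ sdef _ sint]].
pose i1 : 'I_(size BM) := @Ordinal 3 1 isT.
case E: (s i1) => [j|]; last by exfalso; apply: (sdef i1); [apply: ntriv | by []].
have := sint _ _ E.
case: j E => [[|[|[|//]]] Hj] E /=; apply: (not_inter_M (a := (6,0))) => //; exact: imod_ne.
Qed.

Lemma nomatch1 K : ~ matching K BM BN 1.
Proof.
move=> [s [sinj sdef _ sint]].
pose i1 : 'I_(size BM) := @Ordinal 3 1 isT.
pose i2 : 'I_(size BM) := @Ordinal 3 2 isT.
have [j1 E1] : exists j, s i1 = Some j.
  by case E: (s i1) => [j|]; [exists j | exfalso; apply: (sdef i1); [apply: ntriv | by []]].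
have [j2 E2] : exists j, s i2 = Some j.
  by case E: (s i2) => [j|]; [exists j | exfalso; apply: (sdef i2); [apply: ntriv | by []]].
have h1 := sint _ _ E1; have h2 := sint _ _ E2.
have e1 : val j1 = 0%N.
  case: j1 E1 h1 => [[|[|[|//]]] Hj] E /= h //; exfalso; move: h.
  - by apply: (not_inter_N (a := (2,4))) => //; exact: imod_ne.
  - by apply: (not_inter_M (a := (6,0))) => //; exact: imod_ne.
have e2 : val j2 = 0%N.
  case: j2 E2 h2 => [[|[|[|//]]] Hj] E /= h //; exfalso; move: h.
  - by apply: (not_inter_M (a := (4,2))) => //; exact: imod_ne.
  - by apply: (not_inter_N (a := (0,6))) => //; exact: imod_ne.
have ej : j1 = j2 by apply: val_inj; rewrite e1 e2.
have := sinj i1 i2 j1 E1; rewrite ej => /(_ E2) /(congr1 val).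
by [].
Qed.

Lemma p1 K : interleaved (Mmod K) (Nmod K) 1.
Proof.
    change (interleaved (dsum3 K I1 I2 I3) (dsum3 K J1 J2 J3) 1).
    apply: inter3.
    - exact: (natcheck_red I1_box I2_box I3_box J1_box J2_box J3_box chk1).
    - exact: (natcheck_red J1_box J2_box J3_box I1_box I2_box I3_box chk2).
    - exact: (compcheck_red I1_box I2_box I3_box chk3).
    - exact: (compcheck_red J1_box J2_box J3_box chk4).
Qed.
Lemma p2 K : ~ interleaved (Mmod K) (Nmod K) 0.
Proof.
  apply: (not_inter_M (a := (6,0))).
  - by [].
  by apply/eqP => /dsum_dr /dsum_ul; apply/eqP; apply: imod_ne.
Qed.
Lemma p3 K : matching K BM BN 2.
Proof.
  exists (fun i : 'I_(size BM) => Some (i : 'I_(size BN))); split.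
  - by move=> i i' j [->] [].
  - by [].
  - by move=> j _; exists j.
  - move=> i j [<-]; case: i => [[|[|[|//]]] Hi].
    + exact: (pair_inter K I1_box J1_box chkp1).
    + exact: (pair_inter K I2_box J2_box chkp2).
    + exact: (pair_inter K I3_box J3_box chkp3).
Qed.

Theorem mainTheorem8 (K : fieldType) :
  interleaving_dist_is (Mmod K) (Nmod K) 1 /\ bottleneck_dist_is K BM BN 2.
Proof.
split.
  split; first exact: p1.
  by move=> m; rewrite ltnS leqn0 => /eqP ->; exact: p2.
split; first exact: p3.
by move=> m; case: m => [_|[_|//]]; [exact: nomatch0 | exact: nomatch1].
Qed.
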